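(* Let $P(z)=a_1z+a_2z^2+\cdots+a_nz^n$ be a polynomial of degree $n\ge 2$ with positive coefficients, so that $P(0)=0$, and suppose $P'(0)>1$. Then the Julia set $\mathcal{J}(P)$ is symmetric with respect to the real line, contains the point $0$, and does not intersect the positive real line $(0,\infty)$.
   Context: For a polynomial $P$ of degree at least two, the filled Julia set is $K(P)=\{z\in\mathbb{C}: (P^n(z))_{n>0}\text{ is bounded}\}$ and the Julia set $\mathcal{J}(P)$ is the boundary of $K(P)$. *)

(* Defs.v *)
From HB Require Import structures.
From mathcomp Require Import all_boot all_order all_algebra complex.
From mathcomp Require Import all_classical all_reals all_analysis.
Set Implicit Arguments. Unset Strict Implicit. Unset Printing Implicit Defensive.
Import Order.TTheory GRing.Theory Num.Theory.
Import numFieldNormedType.Exports.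
Local Open Scope ring_scope.
Local Open Scope complex_scope.
Local Open Scope classical_set_scope.

(* The complex numbers over a real type R, seen as a numClosedFieldType so that
   MathComp-Analysis equips it with its usual (norm) topology. *)
Definition CC (R : realType) : numClosedFieldType := R[i].

Definition boundary (T : topologicalType) (A : set T) : set T :=
  closure A `\` A°.

Definition filled_julia (R : realType) (P : {poly CC R}) : set (CC R) :=
  [set z | exists M : R, forall n : nat,
      `|iter n (fun w => P.[w]) z| <= M%:C].

Definition julia (R : realType) (P : {poly CC R}) : set (CC R) :=
  boundary (filled_julia P).

(* Main.v *)
Require Import Defs.
From HB Require Import structures.
From mathcomp Require Import all_boot all_order all_algebra complex.
From mathcomp Require Import all_classical all_reals all_analysis.
From mathcomp Require Import lra.
Import Order.TTheory GRing.Theory Num.Theory.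
Import numFieldNormedType.Exports.
Local Open Scope ring_scope.
Local Open Scope complex_scope.
Local Open Scope classical_set_scope.
Set Implicit Arguments. Unset Strict Implicit.

Lemma archiR (R : realType) (c q M : R) : 0 < c -> 1 < q ->
  exists n : nat, M < c * q ^+ n.
Proof.
move=> c0 q1.
have bern : forall n : nat, 1 + n%:R * (q - 1) <= q ^+ n.
  elim => [|n IH]; first by rewrite mul0r addr0 expr0.
  rewrite exprS -addn1 natrD.
  have := ler0n R n; set x := q ^+ n in IH *; set m := (n%:R : R) in IH *.
  move=> m0.
  have h1 : q * (1 + m * (q - 1)) <= q * x by rewrite ler_pM2l // (lt_trans ltr01 q1).
  have h2 : 0 <= m * ((q - 1) * (q - 1)) by rewrite mulr_ge0 // mulr_ge0 // subr_ge0 ltW.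
  nra.
have d0 : 0 < c * (q - 1) by rewrite mulr_gt0 // subr_gt0.
set x := `|M| / (c * (q - 1)).
have x0 : 0 <= x by rewrite divr_ge0 // ltW.
exists (Num.bound x); have := archi_boundP x0.
have := bern (Num.bound x); set N := ((Num.bound x)%:R : R).
have hM : `|M| = x * (c * (q - 1)) by rewrite /x mulrVK // unitfE gt_eqF.
have := ler_norm M; move: hM; set y := q ^+ _.
move=> hM h1 h2 h3; nra.
Qed.

Lemma realC_eq {R : realType} {c : CC R} : 0 <= c -> c = (@complex.Re R c)%:C.
Proof. by move=> c0; rewrite RRe_real // ger0_real. Qed.

Lemma archiC (R : realType) (c q : CC R) (M : R) : 0 < c -> 1 < q ->
  exists n : nat, M%:C < c * q ^+ n.
Proof.
move=> c0 q1.
have q0 : 0 <= q by apply: ltW; apply: lt_trans q1.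
have ec := realC_eq (ltW c0); have eq := realC_eq q0.
rewrite ec eq in c0 q1 *.
rewrite -(rmorph0 (real_complex R)) ltcR in c0.
rewrite -(rmorph1 (real_complex R)) ltcR in q1.
have [n hn] := @archiR R _ _ M c0 q1; exists n.
by rewrite -rmorphXn -rmorphM ltcR.
Qed.

Lemma conj_ge0' (R : realType) (x : CC R) : 0 <= x -> x^* = x.
Proof. by move=> /realC_eq ->; rewrite conjc_real. Qed.

Lemma horner_conj (R : realType) (P : {poly CC R}) :
  (forall i, 0 <= P`_i) -> forall z : CC R, P.[z^*] = (P.[z])^*.
Proof.
move=> Pge z; rewrite !horner_coef rmorph_sum; apply: eq_bigr => i _.
rewrite rmorphM rmorphXn /=; congr (_ * _); exact/esym/conj_ge0'.
Qed.

Lemma iter_conj (R : realType) (P : {poly CC R}) :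
  (forall i, 0 <= P`_i) -> forall n (z : CC R),
  iter n (fun w => P.[w]) z^* = (iter n (fun w => P.[w]) z)^*.
Proof.
move=> Pge; elim=> [//|n IH] z /=; by rewrite IH horner_conj.
Qed.

Lemma filled_conj (R : realType) (P : {poly CC R}) :
  (forall i, 0 <= P`_i) -> forall z : CC R,
  filled_julia P z^* <-> filled_julia P z.
Proof.
move=> Pge z; rewrite /filled_julia /=.
by split=> -[M HM]; exists M => n; [rewrite -normcJ -iter_conj // | rewrite iter_conj // normcJ].
Qed.

Lemma boundary_inv (T : topologicalType) (g : T -> T) (A : set T) :
  continuous g -> involutive g -> (forall x, A (g x) <-> A x) ->
  forall x, boundary A (g x) -> boundary A x.
Proof.
move=> gc gK gA x [cl nint]; split.
  move=> B Bx.
  have : nbhs (g x) (g @^-1` B) by apply: (gc (g x)); rewrite gK.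
  move=> /cl [y [Ay By]]; exists (g y); split => //; exact/gA.
move=> Ax; apply: nint.
have : nbhs (g x) (g @^-1` A) by apply: (gc (g x)); rewrite gK.
by apply: filterS => y /gA.
Qed.

Lemma conj_cont (R : realType) : continuous (fun z : CC R => (z^* : CC R)).
Proof.
move=> x B /nbhs_ballP [e e0 hB]; apply/nbhs_ballP; exists e => // y hy.
apply: hB; move: hy; rewrite -ball_normE /ball_ /= -rmorphB; by have -> := @normcJ R (x - y).
Qed.

Section Esc.
Lemma Pge_of (R : realType) (P : {poly CC R}) :
  P`_0 = 0 -> (forall i : nat, (1 <= i < size P)%N -> 0 < P`_i) ->
  forall i, 0 <= P`_i.
Proof.
move=> P0 Hp [|i]; first by rewrite P0.
case: (ltnP i.+1 (size P)) => h; first by apply/ltW/Hp.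
by rewrite nth_default.
Qed.

Lemma escape (R : realType) (P : {poly CC R}) :
  (3 <= size P)%N -> (forall i : nat, (1 <= i < size P)%N -> 0 < P`_i) ->
  exists r : CC R, 1 <= r /\ forall w, r <= `|w| -> 2 * `|w| <= `|P.[w]|.
Proof.
move=> hs Hp.
set d := (size P).-1.
have hd : size P = d.+1 by rewrite /d prednK // (leq_trans _ hs).
have a0 : 0 < P`_d by apply: Hp; rewrite /d; apply/andP; split; [rewrite -ltnS -hd (leq_trans _ hs)| rewrite hd].
set a := P`_d in a0 *.
set S := \sum_(i < d) `|P`_i|.
have S0 : 0 <= S by apply: sumr_ge0 => i _.
have Sa : 0 <= (S + 2) / a by apply: divr_ge0; [apply: addr_ge0|apply: ltW].
exists (1 + (S + 2) / a); split.
  by rewrite lerDl.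
move=> w hw; set t := `|w| in hw *.
have t1 : 1 <= t by apply: le_trans hw; rewrite lerDl.
have t0 : 0 <= t by apply: le_trans t1.
have ePw : P.[w] = \sum_(i < d) P`_i * w ^+ i + a * w ^+ d.
  by rewrite (horner_coef_wide _ (eq_leq hd)) big_ord_recr.
have h1 : `|\sum_(i < d) P`_i * w ^+ i| <= S * t ^+ d.-1.
  apply: le_trans (ler_norm_sum _ _ _) _.
  rewrite /S mulr_suml; apply: ler_sum => i _.
  rewrite normrM normrX ler_wpM2l //; apply: ler_weXn2l => //.
  by rewrite -ltnS prednK // (leq_trans _ (ltn_ord i)) // ?ltn_ord //; case: d i => [[]|].
have h2 : `|a * w ^+ d| = a * t ^+ d by rewrite normrM normrX gtr0_norm.
have key : 2 <= a * t - S.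
  rewrite lerBrDr; apply: le_trans (_ : a * (1 + (S + 2) / a) <= _).
    by rewrite mulrDr mulr1 mulrCA divff ?gt_eqF // mulr1 (addrC 2) lerDr (ltW a0).
  by rewrite ler_pM2l.
have hd1 : (0 < d.-1)%N by rewrite /d -subn2 subn_gt0.
have tdd : t ^+ d = t * t ^+ d.-1.
  have hd0 : (0 < d)%N by rewrite /d -subn1 subn_gt0 (leq_trans _ hs).
  by rewrite -exprS prednK.
apply: le_trans (_ : 2 * t ^+ d.-1 <= _).
  by rewrite ler_wpM2l // ler_eXnr.
apply: le_trans (_ : (a * t - S) * t ^+ d.-1 <= _).
  by rewrite ler_wpM2r // exprn_ge0.
rewrite ePw [X in `|X|]addrC; apply: le_trans (lerB_normD _ _).
by rewrite h2 mulrBl -mulrA -tdd lerD2l lerN2.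
Qed.
End Esc.

Lemma iter_escape (R : realType) (P : {poly CC R}) (r : CC R) :
  1 <= r -> (forall w, r <= `|w| -> 2 * `|w| <= `|P.[w]|) ->
  forall w, r <= `|w| -> forall k,
  2 ^+ k * `|w| <= `|iter k (fun w => P.[w]) w|.
Proof.
move=> r1 hr w hw; elim=> [|k IH]; first by rewrite expr0 mul1r.
have hk : r <= `|iter k (fun w => P.[w]) w|.
  apply: le_trans hw (le_trans _ IH).
  by rewrite ler_peMl // exprn_ege1 // ler1n.
rewrite /= exprS -mulrA; apply: le_trans (hr _ hk).
by rewrite ler_wpM2l.
Qed.

Lemma escape_not_filled (R : realType) (P : {poly CC R}) (r : CC R) :
  1 <= r -> (forall w, r <= `|w| -> 2 * `|w| <= `|P.[w]|) ->
  forall w, r <= `|w| -> ~ filled_julia P w.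
Proof.
move=> r1 hr w hw [M HM].
have w0 : 0 < `|w| by apply: lt_le_trans hw; apply: lt_le_trans r1.
have [n hn] := @archiC R _ 2 M w0 (ltr1n _ 2).
suff h : `|w| * 2 ^+ n <= M%:C by have := lt_le_trans hn h; rewrite ltxx.
rewrite mulrC; exact: (le_trans (@iter_escape R P r r1 hr w hw n) (HM n)).
Qed.

Lemma filled_iter (R : realType) (P : {poly CC R}) m z :
  filled_julia P z -> filled_julia P (iter m (fun w => P.[w]) z).
Proof. by move=> [M HM]; exists M => n; rewrite -iterD. Qed.

Lemma lower_bd (R : realType) (P : {poly CC R}) :
  (3 <= size P)%N -> (forall i, 0 <= P`_i) ->
  forall x : CC R, 0 < x -> P`_1 * x <= P.[x].
Proof.
move=> hs Pge x x0.
have h1 : (1 < size P)%N by apply: leq_trans hs.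
rewrite horner_coef (bigD1 (Ordinal h1)) //= expr1 lerDl.
by apply: sumr_ge0 => i _; rewrite mulr_ge0 // exprn_ge0 // ltW.
Qed.

Lemma iter_lower (R : realType) (P : {poly CC R}) :
  (3 <= size P)%N -> (forall i, 0 <= P`_i) -> 0 < P`_1 ->
  forall x : CC R, 0 < x -> forall m,
  P`_1 ^+ m * x <= iter m (fun w => P.[w]) x.
Proof.
move=> hs Pge a0 x x0; elim=> [|m IH]; first by rewrite expr0 mul1r.
have hp : 0 < iter m (fun w => P.[w]) x.
  by apply: lt_le_trans IH; rewrite mulr_gt0 // exprn_gt0.
apply: le_trans (lower_bd hs Pge hp).
by rewrite exprS -mulrA ler_pM2l.
Qed.

Lemma pos_not_filled (R : realType) (P : {poly CC R}) :
  (3 <= size P)%N -> P`_0 = 0 -> (forall i : nat, (1 <= i < size P)%N -> 0 < P`_i) ->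
  1 < P`_1 -> forall x : CC R, 0 < x ->
  exists r : CC R, 1 <= r /\ (forall w, r <= `|w| -> 2 * `|w| <= `|P.[w]|) /\
  exists m, r < `|iter m (fun w => P.[w]) x|.
Proof.
move=> hs P0 Hp a1 x x0.
have Pge := Pge_of P0 Hp.
have [r [r1 hr]] := escape hs Hp.
exists r; split => //; split => //.
have a0 : 0 < P`_1 by apply: lt_trans a1.
have [m hm] := @archiC R _ _ (complex.Re r) x0 a1.
exists m; rewrite -(realC_eq (le_trans ler01 r1)) in hm.
have hi := iter_lower hs Pge a0 x0 m.
rewrite ger0_norm; first by apply: lt_le_trans hi; rewrite mulrC.
by apply: ltW; apply: lt_le_trans hi; rewrite mulr_gt0 // exprn_gt0.
Qed.

Lemma horner_cont (R : realType) (p : {poly CC R}) :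
  continuous (fun z : CC R => (p.[z] : CC R)).
Proof.
elim/poly_ind: p => [|p c IH].
  have -> : (fun z : CC R => ((0 : {poly CC R}).[z] : CC R)) = (fun=> 0).
    by apply/funext => z; rewrite horner0.
  exact: cst_continuous.
have -> : (fun z : CC R => ((p * 'X + c%:P).[z] : CC R)) = (fun z => p.[z] * z + c).
  by apply/funext => z; rewrite hornerMXaddC.
move=> x.
have h1 := @cvgM (CC R) (CC R) (nbhs x) (nbhs_filter x) _ _ _ _ (IH x) (@cvg_id _ (nbhs x)).
have h2 := @cvgD (CC R) (CC R) (CC R) (nbhs x) (nbhs_filter x) _ (fun=> c) _ c h1 (cvg_cst c).
exact: h2.
Qed.

Lemma iter_cont (R : realType) (P : {poly CC R}) m :
  continuous (fun z : CC R => (iter m (fun w => P.[w]) z : CC R)).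
Proof.
elim: m => [|m IH] x /=; first exact: cvg_id.
apply: (@continuous_comp _ _ _ (fun z : CC R => (iter m (fun w => P.[w]) z : CC R))
  (fun z : CC R => (P.[z] : CC R))); [exact: IH | exact: horner_cont].
Qed.

Unset Implicit Arguments.

Theorem lemma3p1 (R : realType) (P : {poly CC R}) :
  (3 <= size P)%N ->
  P`_0 = 0 ->
  (forall i : nat, (1 <= i < size P)%N -> 0 < P`_i) ->
  1 < (P^`()).[0] ->
  (forall z : CC R, julia P z <-> julia P z^*) /\
  julia P 0 /\
  (forall x : R, 0 < x -> ~ julia P (x%:C : CC R)).
Proof.
move=> hs P0 Hp d1.
have a1 : 1 < P`_1 by move: d1; rewrite horner_coef0 coef_deriv mulr1n.
have Pge := Pge_of P0 Hp.
have gA : forall x : CC R, filled_julia P (x^* : CC R) <-> filled_julia P x.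
  by move=> x; apply: filled_conj.
have posnf : forall x : CC R, 0 < x -> ~ filled_julia P x.
  move=> x x0 hx.
  have [r [r1 [hr [m hm]]]] := pos_not_filled hs P0 Hp a1 x0.
  exact: (escape_not_filled r1 hr (ltW hm) (filled_iter m hx)).
split.
  move=> z; rewrite /julia; split => h.
    apply: (@boundary_inv _ (fun z : CC R => (z^* : CC R))).
    - exact: conj_cont.
    - exact: conjcK.
    - exact: gA.
    - by rewrite /= conjcK.
  apply: (@boundary_inv _ (fun z : CC R => (z^* : CC R))) h.
  - exact: conj_cont.
  - exact: conjcK.
  - exact: gA.
split.
  rewrite /julia; split.
    apply: subset_closure; exists 0 => n.
    have -> : iter n (fun w => P.[w]) 0 = 0.
      by elim: n => //= n ->; rewrite horner_coef0.
    by rewrite normr0 rmorph0.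
  move=> /nbhs_ballP [e e0 he].
  have e0' : 0 < e := e0.
  have h2 : 0 < e / 2 by rewrite divr_gt0.
  apply: (posnf _ h2); apply: he.
  rewrite -ball_normE /ball_ /= sub0r normrN gtr0_norm //.
  by rewrite ltr_pdivrMr // ltr_pMr // ltr1n.
move=> x x0 [cl _].
have x0' : 0 < (x%:C : CC R) by rewrite ltcE /= eqxx.
have [r [r1 [hr [m hm]]]] := pos_not_filled hs P0 Hp a1 x0'.
set y := iter m (fun w => P.[w]) x%:C in hm.
have e0 : 0 < `|y| - r by rewrite subr_gt0.
have hc := @iter_cont R P m (x%:C).
have hb : nbhs y (ball y (`|y| - r)) := @nbhsx_ballx (CC R) (CC R) y _ e0.
have hd := hc _ hb.
move: hd; rewrite nbhs_filterE /= => hd.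
have [z [Kz Bz]] := cl _ hd.
apply: (escape_not_filled r1 hr _ (filled_iter m Kz)).
move: Bz; rewrite -ball_normE /ball_ /= => Bz.
have := lerB_dist y (y - iter m (fun w => P.[w]) z).
rewrite subKr => h; apply: le_trans h; apply: ltW.
by rewrite ltrBrDl -ltrBrDr.
Qed.
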